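(* Let $\mathscr H_1,\dots,\mathscr H_N$ be null hypotheses with associated random ''p-values'' $p_1,\dots,p_N$; call $p_l$ null if $\mathscr H_l$ is true. Assume the null p-values are i.i.d., satisfy $\Pr(p_l\le u)\le u$ for all $u\in[0,1]$, and are independent of the non-null p-values. Fix $q\in(0,1]$ and $\mathcal K\subset\{1,\dots,N\}$. Define $$\hat k=\max\Big\{k\in\mathcal K:\frac{\#\{l\le k:p_l>1/2\}}{\#\{l\le k:p_l\le 1/2\}\vee1}\le q\Big\},\qquad \hat k_+=\max\Big\{k\in\mathcal K:\frac{1+\#\{l\le k:p_l>1/2\}}{\#\{l\le k:p_l\le 1/2\}\vee1}\le q\Big\},$$ with $\hat k=0$ (resp. $\hat k_+=0$) if the set is empty, and reject $\mathscr H_k$ for all $k\le\hat k$ (resp. $k\le \hat k_+$) with $p_k\le1/2$. Let $V=\#\{l\le\hat k: p_l\text{ null},\ p_l\le1/2\}$, $R=\#\{l\le\hat k:p_l\le1/2\}$, $V_+=\#\{l\le\hat k_+: p_l\text{ null},\ p_l\le1/2\}$, $R_+=\#\{l\le\hat k_+:p_l\le1/2\}$ (all zero when the corresponding $\hat k$ or $\hat k_+$ is $0$). Then $$\mathbb E\Big[\frac{V}{R+q^{-1}}\Big]\le q\qquad\text{and}\qquad \mathbb E\Big[\frac{V_+}{R_+\vee1}\Big]\le q.$$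
   Context: Indices $l\le k$ range over $\{1,\dots,k\}$; $a\vee b=\max\{a,b\}$. *)

(* Defs.v *)
From Stdlib Require Import Reals Bool.
Open Scope R_scope.

Record ProbSpace := {
  Omega :> Type;
  ev : (Omega -> Prop) -> Prop;
  Pr : (Omega -> Prop) -> R;
  ev_ext : forall A B, (forall w, A w <-> B w) -> ev A -> ev B;
  ev_full : ev (fun _ => True);
  ev_compl : forall A, ev A -> ev (fun w => ~ A w);
  ev_cunion : forall A : nat -> Omega -> Prop,
      (forall n, ev (A n)) -> ev (fun w => exists n, A n w);
  Pr_ext : forall A B, (forall w, A w <-> B w) -> Pr A = Pr B;
  Pr_nonneg : forall A, ev A -> 0 <= Pr A;
  Pr_full : Pr (fun _ => True) = 1;
  Pr_sigma_add : forall A : nat -> Omega -> Prop,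
      (forall n, ev (A n)) ->
      (forall n m, n <> m -> forall w, A n w -> A m w -> False) ->
      infinite_sum (fun n => Pr (A n)) (Pr (fun w => exists n, A n w))
}.

Fixpoint prod1 (n : nat) (f : nat -> R) : R :=
  match n with O => 1 | S m => prod1 m f * f (S m) end.

Fixpoint cnt (P : nat -> bool) (k : nat) : nat :=
  match k with O => O | S m => (cnt P m + (if P (S m) then 1 else 0))%nat end.

Fixpoint max_upto (cond : nat -> bool) (n : nat) : nat :=
  match n with O => O | S m => if cond (S m) then S m else max_upto cond m end.

Definition Rleb (x y : R) : bool := if Rle_dec x y then true else false.

Section Procedure.
Variable Om : Type.
Variable p : nat -> Om -> R.

Definition small (w : Om) (l : nat) : bool := Rleb (p l w) (1/2).
Definition big (w : Om) (l : nat) : bool := negb (small w l).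

(* c = 0 gives \hat k, c = 1 gives \hat k_+ *)
Definition khat_gen (c : nat) (N : nat) (K : nat -> bool) (q : R) (w : Om) : nat :=
  max_upto (fun k => K k &&
     Rleb ((INR c + INR (cnt (big w) k)) / INR (Nat.max (cnt (small w) k) 1)) q) N.

Definition Rcount (kh : nat) (w : Om) : nat := cnt (small w) kh.
Definition Vcount (null : nat -> bool) (kh : nat) (w : Om) : nat :=
  cnt (fun l => null l && small w l) kh.
End Procedure.

(* Expectation of f(V,R) for nat-valued random variables V, R with values in
   {0..N}: sum over all values of f v r * Pr(V = v /\ R = r). *)
Definition expect2 (Pspace : ProbSpace) (N : nat) (f : nat -> nat -> R)
    (V Rr : Pspace -> nat) : R :=
  sum_f_R0 (fun v => sum_f_R0 (fun r =>
      f v r * Pr Pspace (fun w => V w = v /\ Rr w = r)) N) N.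

(* Null p-values (indices 1..N with null l = true) are mutually independent
   and independent of the vector of non-null p-values: the joint CDF on any
   subset S of indices factorises. *)
Definition nulls_indep (Ps : ProbSpace) (N : nat) (null : nat -> bool)
    (p : nat -> Ps -> R) : Prop :=
  forall (S : nat -> bool) (u : nat -> R),
    Pr Ps (fun w => forall l, (1 <= l <= N)%nat -> S l = true -> p l w <= u l)
    = prod1 N (fun l => if S l && null l
                        then Pr Ps (fun w => p l w <= u l) else 1)
      * Pr Ps (fun w => forall l, (1 <= l <= N)%nat -> S l = true ->
                          null l = false -> p l w <= u l).

Definition nulls_ident (Ps : ProbSpace) (N : nat) (null : nat -> bool)
    (p : nat -> Ps -> R) : Prop :=
  forall l l', (1 <= l <= N)%nat -> (1 <= l' <= N)%nat ->
    null l = true -> null l' = true ->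
    forall u, Pr Ps (fun w => p l w <= u) = Pr Ps (fun w => p l' w <= u).

Definition nulls_superunif (Ps : ProbSpace) (N : nat) (null : nat -> bool)
    (p : nat -> Ps -> R) : Prop :=
  forall l, (1 <= l <= N)%nat -> null l = true ->
    forall u, 0 <= u <= 1 -> Pr Ps (fun w => p l w <= u) <= u.

(* Main.v *)
Require Import Defs.
From Stdlib Require Import Reals Lra Lia Bool FunctionalExtensionality Classical Arith.
Open Scope R_scope.

Fixpoint Cb (n k : nat) : nat :=
  match n, k with
  | _, O => 1%nat
  | O, S _ => 0%nat
  | S n', S k' => (Cb n' k' + Cb n' (S k'))%nat
  end.

Lemma Cb_gt : forall n k, (n < k)%nat -> Cb n k = 0%nat.
Proof.
  induction n; intros k H; destruct k; simpl; try lia; auto.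
  rewrite !IHn by lia. lia.
Qed.

Lemma Cb_n0 : forall n, Cb n 0 = 1%nat.
Proof. destruct n; reflexivity. Qed.

Lemma Cb_ratio : forall n k, (Cb n (S k) * S k = Cb n k * (n - k))%nat.
Proof.
  induction n; intros k.
  - simpl. lia.
  - destruct k.
    + pose proof (IHn 0%nat) as H. rewrite Cb_n0 in H.
      change (Cb (S n) 1) with (Cb n 0 + Cb n 1)%nat. rewrite !Cb_n0. lia.
    + change (Cb (S n) (S (S k))) with (Cb n (S k) + Cb n (S (S k)))%nat.
      change (Cb (S n) (S k)) with (Cb n k + Cb n (S k))%nat.
      pose proof (IHn (S k)) as H1. pose proof (IHn k) as H2.
      destruct (Compare_dec.le_lt_dec (S k) n) as [Hl|Hl].
      * replace (S n - S k)%nat with (n - k)%nat by lia.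
        rewrite Nat.mul_add_distr_r, H1, Nat.mul_add_distr_r, <- H2.
        rewrite <- !Nat.mul_add_distr_l. f_equal. lia.
      * rewrite (Cb_gt n (S k)) by lia. rewrite (Cb_gt n (S (S k))) by lia.
        rewrite (Cb_gt n (S k)) in H2 by lia. lia.
Qed.

Lemma cnt_ext : forall P Q k, (forall l, (1 <= l <= k)%nat -> P l = Q l) -> cnt P k = cnt Q k.
Proof.
  induction k; intros H; simpl; auto.
  rewrite IHk by (intros; apply H; lia). rewrite H by lia. reflexivity.
Qed.

Lemma cnt_le : forall P k, (cnt P k <= k)%nat.
Proof. induction k; simpl; auto. destruct (P (S k)); lia. Qed.

Lemma cnt_mono : forall P Q k, (forall l, P l = true -> Q l = true) -> (cnt P k <= cnt Q k)%nat.
Proof.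
  induction k; intros H; simpl; auto.
  specialize (IHk H). destruct (P (S k)) eqn:E.
  - rewrite (H _ E). lia.
  - destruct (Q (S k)); lia.
Qed.

Lemma cnt_split : forall P Q k,
  cnt P k = (cnt (fun l => P l && Q l) k + cnt (fun l => P l && negb (Q l)) k)%nat.
Proof.
  induction k; simpl; auto. rewrite IHk. destruct (P (S k)), (Q (S k)); simpl; lia.
Qed.

Lemma cnt_true : forall k, cnt (fun _ => true) k = k.
Proof. induction k; simpl; auto. lia. Qed.

Lemma cnt_neg : forall P k, (cnt P k + cnt (fun l => negb (P l)) k = k)%nat.
Proof. induction k; simpl; auto. destruct (P (S k)); simpl; lia. Qed.

Lemma max_upto_le : forall c n, (max_upto c n <= n)%nat.
Proof. induction n; simpl; auto. destruct (c (S n)); lia. Qed.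

Lemma max_upto_spec : forall c n, max_upto c n = 0%nat \/ c (max_upto c n) = true.
Proof. induction n; simpl; auto. destruct (c (S n)) eqn:E; auto. Qed.

Lemma max_upto_ext : forall c d n, (forall k, (1 <= k <= n)%nat -> c k = d k) ->
  max_upto c n = max_upto d n.
Proof.
  induction n; intros H; simpl; auto.
  rewrite H by lia. rewrite IHn by (intros; apply H; lia). reflexivity.
Qed.

Lemma prod1_ext : forall n f g, (forall l, (1 <= l <= n)%nat -> f l = g l) -> prod1 n f = prod1 n g.
Proof.
  induction n; intros f g H; simpl; auto.
  rewrite (IHn f g) by (intros; apply H; lia). rewrite H by lia. reflexivity.
Qed.

Lemma prod1_one : forall n f g j c, (1 <= j <= n)%nat ->
  (forall l, l <> j -> f l = g l) -> g j = c * f j -> prod1 n g = c * prod1 n f.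
Proof.
  induction n; intros f g j c Hj Hfg Hg; [lia|]. simpl.
  destruct (Nat.eq_dec j (S n)) as [->|Hne].
  - rewrite (prod1_ext n g f) by (intros; symmetry; apply Hfg; lia).
    rewrite Hg. ring.
  - rewrite (IHn f g j c) by (auto; lia). rewrite (Hfg (S n)) by lia. ring.
Qed.

Lemma prod1_nonneg : forall n f, (forall l, 0 <= f l) -> 0 <= prod1 n f.
Proof. induction n; intros f H; simpl; [lra|]. apply Rmult_le_pos; auto. Qed.

Lemma sum_ind_eq : forall n a g, (a <= n)%nat ->
  sum_f_R0 (fun i => if Nat.eqb a i then g i else 0) n = g a.
Proof.
  induction n; intros a g H; cbn [sum_f_R0].
  - assert (a = 0%nat) by lia. subst. reflexivity.
  - destruct (Nat.eq_dec a (S n)) as [->|Hne].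
    + rewrite Nat.eqb_refl.
      replace (sum_f_R0 (fun i => if Nat.eqb (S n) i then g i else 0) n) with 0. ring.
      clear. assert (forall m, (m <= n)%nat -> sum_f_R0 (fun i => if Nat.eqb (S n) i then g i else 0) m = 0).
      { induction m; intros Hm; cbn [sum_f_R0].
        - reflexivity.
        - rewrite IHm by lia. replace (Nat.eqb (S n) (S m)) with false. ring.
          symmetry. apply Nat.eqb_neq. lia. }
      symmetry. apply H. lia.
    + rewrite IHn by lia. replace (Nat.eqb a (S n)) with false. ring.
      symmetry. apply Nat.eqb_neq. lia.
Qed.

Lemma sum_shift : forall a n, sum_f_R0 a (S n) = a 0%nat + sum_f_R0 (fun i => a (S i)) n.
Proof. intros a n; induction n; simpl in *; [ring|]. rewrite IHn. ring. Qed.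

Lemma sum_nonneg : forall a n, (forall i, 0 <= a i) -> 0 <= sum_f_R0 a n.
Proof. intros a n H; induction n; simpl; auto. specialize (H (S n)). lra. Qed.
Definition upd (x : nat -> bool) (k : nat) (b : bool) : nat -> bool :=
  fun l => if Nat.eqb l k then b else x l.

Fixpoint sumG (T : nat -> bool) (n : nat) (F : (nat -> bool) -> R) (x : nat -> bool) : R :=
  match n with
  | O => F x
  | S m => if T (S m) then sumG T m F (upd x (S m) true) + sumG T m F (upd x (S m) false)
           else sumG T m F x
  end.

Definition Dom (T : nat -> bool) (n : nat) (x z : nat -> bool) : Prop :=
  forall l, z l <> x l -> T l = true /\ (1 <= l <= n)%nat.

Lemma Dom_refl : forall T n x, Dom T n x x.
Proof. intros T n x l H. congruence. Qed.

Lemma Dom_up : forall T n x b z, T (S n) = true -> Dom T n (upd x (S n) b) z -> Dom T (S n) x z.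
Proof.
  intros T n x b z HT H l Hl. unfold Dom, upd in H.
  destruct (Nat.eq_dec l (S n)) as [->|Hne].
  - split; auto; lia.
  - specialize (H l). rewrite (proj2 (Nat.eqb_neq l (S n)) Hne) in H.
    destruct (H Hl). split; auto; lia.
Qed.

Lemma Dom_up' : forall T n x z, T (S n) = false -> Dom T n x z -> Dom T (S n) x z.
Proof. intros T n x z HT H l Hl. destruct (H l Hl). split; auto; lia. Qed.

Lemma Dom_upd_val : forall T n x b z, Dom T n (upd x (S n) b) z -> z (S n) = b.
Proof.
  intros T n x b z H. destruct (Bool.bool_dec (z (S n)) b) as [e|ne]; auto.
  exfalso. assert (Hz : z (S n) <> upd x (S n) b (S n)) by (unfold upd; rewrite Nat.eqb_refl; auto).
  destruct (H _ Hz). lia.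
Qed.

Lemma Dom_eq : forall T n x z l, Dom T n x z -> (T l = false \/ ~ (1 <= l <= n)%nat) -> z l = x l.
Proof.
  intros T n x z l H Hl. destruct (Bool.bool_dec (z l) (x l)) as [e|ne]; auto.
  destruct (H l ne). destruct Hl; [congruence|tauto].
Qed.

Lemma sumG_ext : forall T n F G x, (forall z, Dom T n x z -> F z = G z) ->
  sumG T n F x = sumG T n G x.
Proof.
  induction n; intros F G x H; simpl.
  - apply H, Dom_refl.
  - destruct (T (S n)) eqn:HT.
    + rewrite (IHn F G), (IHn F G (upd x (S n) false)); auto;
        intros z Hz; apply H; eapply Dom_up; eauto.
    + apply IHn. intros z Hz; apply H; apply Dom_up'; auto.
Qed.

Lemma sumG_le : forall T n F G x, (forall z, Dom T n x z -> F z <= G z) ->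
  sumG T n F x <= sumG T n G x.
Proof.
  induction n; intros F G x H; simpl.
  - apply H, Dom_refl.
  - destruct (T (S n)) eqn:HT.
    + apply Rplus_le_compat; apply IHn;
        intros z Hz; apply H; eapply Dom_up; eauto.
    + apply IHn. intros z Hz; apply H; apply Dom_up'; auto.
Qed.

Lemma sumG_plus : forall T n F G x,
  sumG T n (fun z => F z + G z) x = sumG T n F x + sumG T n G x.
Proof.
  induction n; intros F G x; simpl; auto.
  destruct (T (S n)); rewrite ?IHn; ring.
Qed.

Lemma sumG_scal : forall T n c F x,
  sumG T n (fun z => c * F z) x = c * sumG T n F x.
Proof.
  induction n; intros c F x; simpl; auto.
  destruct (T (S n)); rewrite ?IHn; ring.
Qed.

Lemma sumG_zero : forall T n x, sumG T n (fun _ => 0) x = 0.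
Proof.
  induction n; intros x; simpl; auto. destruct (T (S n)); rewrite ?IHn; ring.
Qed.

Lemma sumG_sum : forall T n F k x,
  sumG T n (fun z => sum_f_R0 (fun i => F i z) k) x = sum_f_R0 (fun i => sumG T n (F i) x) k.
Proof.
  induction k; intros x; cbn [sum_f_R0]; auto.
  rewrite sumG_plus, IHk. reflexivity.
Qed.

Lemma sumG_nonneg : forall T n F x, (forall z, Dom T n x z -> 0 <= F z) -> 0 <= sumG T n F x.
Proof.
  intros. rewrite <- (sumG_zero T n x). apply sumG_le. auto.
Qed.
(* ---------- Part B: optional stopping, combinatorial form ---------- *)
Definition cntT (T z : nat -> bool) k := cnt (fun l => T l && z l) k.
Definition cntTn (T z : nat -> bool) k := cnt (fun l => T l && negb (z l)) k.
Definition Mv (T : nat -> bool) k (z : nat -> bool) := INR (cntT T z k) / (1 + INR (cntTn T z k)).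
Definition tau (condv : nat -> nat -> nat -> bool) n (z : nat -> bool) :=
  max_upto (fun k => condv k (cnt z k) (cnt (fun l => negb (z l)) k)) n.
Definition Bd m s := match s with O => 0 | S s' => INR (Cb m s') end.
Definition wt (T : nat -> bool) (rho : R) (z : nat -> bool) l :=
  if T l then (if z l then rho else 1 - rho) else 1.

Lemma cntT_S : forall T z n, cntT T z (S n) = (cntT T z n + if T (S n) && z (S n) then 1 else 0)%nat.
Proof. reflexivity. Qed.

Lemma tau_S : forall condv n z, tau condv (S n) z =
  if condv (S n) (cnt z (S n)) (cnt (fun l => negb (z l)) (S n)) then S n else tau condv n z.
Proof. reflexivity. Qed.

Lemma cnt_T_split : forall T z k, cnt T k = (cntT T z k + cntTn T z k)%nat.
Proof. intros. apply cnt_split. Qed.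

Lemma cnt_z_dom : forall T n x z k, Dom T n x z ->
  cnt z k = (cntT T z k + cnt (fun l => negb (T l) && x l) k)%nat.
Proof.
  intros. rewrite (cnt_split z T). unfold cntT. f_equal.
  - apply cnt_ext. intros. apply andb_comm.
  - apply cnt_ext. intros l _. destruct (T l) eqn:E; simpl; [apply andb_false_r|].
    rewrite andb_true_r. apply (Dom_eq T n x z l H). auto.
Qed.

Lemma Mv_nonneg : forall T k z, 0 <= Mv T k z.
Proof.
  intros. unfold Mv. pose proof (pos_INR (cntT T z k)). pose proof (pos_INR (cntTn T z k)).
  apply Rmult_le_pos; auto. left. apply Rinv_0_lt_compat. lra.
Qed.

Section PartB.
Variable T : nat -> bool.
Variable condv : nat -> nat -> nat -> bool.

Lemma class_count : forall n s x,
  sumG T n (fun z => if Nat.eqb (cntT T z n) s then 1 else 0) x = INR (Cb (cnt T n) s).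
Proof.
  induction n; intros s x.
  - simpl. destruct s; reflexivity.
  - simpl sumG. change (cnt T (S n)) with (cnt T n + if T (S n) then 1 else 0)%nat.
    destruct (T (S n)) eqn:HT.
    + rewrite (sumG_ext T n _ (fun z => match s with O => 0 | S s' =>
          if Nat.eqb (cntT T z n) s' then 1 else 0 end)).
      2:{ intros z Hz. rewrite cntT_S, HT, (Dom_upd_val _ _ _ _ _ Hz). simpl.
          destruct s; [rewrite Nat.add_1_r; reflexivity|].
          rewrite Nat.add_1_r. reflexivity. }
      rewrite (sumG_ext T n _ (fun z => if Nat.eqb (cntT T z n) s then 1 else 0) (upd x (S n) false)).
      2:{ intros z Hz. rewrite cntT_S, HT, (Dom_upd_val _ _ _ _ _ Hz). simpl.
          rewrite Nat.add_0_r. reflexivity. }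
      rewrite IHn. rewrite Nat.add_1_r. destruct s.
      * rewrite sumG_zero, !Cb_n0. simpl. ring.
      * rewrite IHn. simpl. rewrite plus_INR. ring.
    + rewrite Nat.add_0_r. rewrite <- (IHn s x). apply sumG_ext.
      intros z Hz. rewrite cntT_S, HT. simpl. rewrite Nat.add_0_r. reflexivity.
Qed.

Lemma stop_bound : forall n s x,
  sumG T n (fun z => if Nat.eqb (cntT T z n) s then Mv T (tau condv n z) z else 0) x
  <= Bd (cnt T n) s.
Proof.
  induction n; intros s x.
  - simpl. unfold Mv, tau. simpl. unfold cntT, cntTn. simpl.
    destruct s; simpl.
    + unfold Rdiv. rewrite Rmult_0_l. lra.
    + apply pos_INR.
  - set (cnn := cnt (fun l => negb (T l) && x l) (S n)).
    assert (Hcc : forall z, Dom T (S n) x z -> cntT T z (S n) = s ->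
      condv (S n) (cnt z (S n)) (cnt (fun l => negb (z l)) (S n))
      = condv (S n) (s + cnn) (S n - (s + cnn))).
    { intros z Hz Hs. pose proof (cnt_z_dom T (S n) x z (S n) Hz) as E.
      pose proof (cnt_neg z (S n)) as E2. rewrite Hs in E. fold cnn in E.
      f_equal; lia. }
    destruct (condv (S n) (s + cnn) (S n - (s + cnn))) eqn:Hb.
    + rewrite (sumG_ext T (S n) _ (fun z => INR s / (1 + INR (cnt T (S n) - s)) *
          (if Nat.eqb (cntT T z (S n)) s then 1 else 0))).
      2:{ intros z Hz. destruct (Nat.eqb_spec (cntT T z (S n)) s) as [e|ne]; [|ring].
          rewrite tau_S, (Hcc z Hz e). unfold Mv. rewrite e.
          rewrite (cnt_T_split T z (S n)), e. replace (s + cntTn T z (S n) - s)%nat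
            with (cntTn T z (S n)) by lia. ring. }
      rewrite sumG_scal, class_count. set (M := cnt T (S n)).
      destruct s as [|s'].
      * simpl. unfold Rdiv. rewrite Rmult_0_l, !Rmult_0_l. lra.
      * simpl Bd. destruct (Compare_dec.le_lt_dec (S s') M) as [Hl|Hl].
        -- pose proof (Cb_ratio M s') as Hr. apply (f_equal INR) in Hr.
           rewrite !mult_INR in Hr.
           assert (E1 : 1 + INR (M - S s') = INR (M - s')).
           { replace (M - s')%nat with (S (M - S s')) by lia. rewrite S_INR. ring. }
           rewrite E1. assert (INR (M - s') <> 0) by (apply not_0_INR; lia).
           right. apply (Rmult_eq_reg_r (INR (M - s'))); auto.
           rewrite <- Hr. field. auto.
        -- rewrite (Cb_gt M (S s')) by lia. simpl INR. rewrite Rmult_0_r.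
           apply pos_INR.
    + rewrite (sumG_ext T (S n) _ (fun z => if Nat.eqb (cntT T z (S n)) s
           then Mv T (tau condv n z) z else 0)).
      2:{ intros z Hz. destruct (Nat.eqb_spec (cntT T z (S n)) s) as [e|ne]; [|reflexivity].
          rewrite tau_S, (Hcc z Hz e). reflexivity. }
      clear Hcc Hb. simpl sumG. change (cnt T (S n)) with (cnt T n + if T (S n) then 1 else 0)%nat.
      destruct (T (S n)) eqn:HT.
      * rewrite (sumG_ext T n _ (fun z => match s with O => 0 | S s' =>
          if Nat.eqb (cntT T z n) s' then Mv T (tau condv n z) z else 0 end)).
        2:{ intros z Hz. rewrite cntT_S, HT, (Dom_upd_val _ _ _ _ _ Hz). simpl.
            rewrite Nat.add_1_r. destruct s; reflexivity. }
        rewrite (sumG_ext T n _ (fun z => if Nat.eqb (cntT T z n) s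
            then Mv T (tau condv n z) z else 0) (upd x (S n) false)).
        2:{ intros z Hz. rewrite cntT_S, HT, (Dom_upd_val _ _ _ _ _ Hz). simpl.
            rewrite Nat.add_0_r. reflexivity. }
        rewrite Nat.add_1_r. destruct s as [|s'].
        -- rewrite sumG_zero. pose proof (IHn 0%nat (upd x (S n) false)). simpl in *. lra.
        -- pose proof (IHn s' (upd x (S n) true)). pose proof (IHn (S s') (upd x (S n) false)).
           assert (Bd (cnt T n) s' + Bd (cnt T n) (S s') = Bd (S (cnt T n)) (S s')).
           { destruct s'; simpl Bd.
             - rewrite !Cb_n0. simpl. ring.
             - simpl Cb. rewrite plus_INR. ring. }
           lra.
      * rewrite Nat.add_0_r. eapply Rle_trans; [|apply (IHn s x)]. right. apply sumG_ext.
        intros z Hz. rewrite cntT_S, HT. simpl. rewrite Nat.add_0_r. reflexivity.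
Qed.

Lemma prod_wt : forall rho z n,
  prod1 n (wt T rho z) = rho ^ (cntT T z n) * (1 - rho) ^ (cntTn T z n).
Proof.
  induction n; simpl; [ring|]. rewrite IHn. unfold wt, cntT, cntTn. simpl.
  destruct (T (S n)), (z (S n)); simpl; rewrite ?Nat.add_0_r, ?Nat.add_1_r; simpl; ring.
Qed.

Lemma total_mass : forall rho n x, sumG T n (fun z => prod1 n (wt T rho z)) x = 1.
Proof.
  induction n; intros x; simpl; [reflexivity|].
  destruct (T (S n)) eqn:HT.
  - rewrite (sumG_ext T n _ (fun z => rho * prod1 n (wt T rho z))).
    2:{ intros z Hz. unfold wt at 2. rewrite HT, (Dom_upd_val _ _ _ _ _ Hz). ring. }
    rewrite (sumG_ext T n _ (fun z => (1 - rho) * prod1 n (wt T rho z)) (upd x (S n) false)).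
    2:{ intros z Hz. unfold wt at 2. rewrite HT, (Dom_upd_val _ _ _ _ _ Hz). ring. }
    rewrite !sumG_scal, !IHn. ring.
  - rewrite <- (IHn x). apply sumG_ext. intros z _. unfold wt at 2. rewrite HT. ring.
Qed.

Lemma class_decomp : forall n G x,
  sumG T n G x = sum_f_R0 (fun s => sumG T n (fun z => if Nat.eqb (cntT T z n) s then G z else 0) x) n.
Proof.
  intros. rewrite <- sumG_sum. apply sumG_ext. intros z _.
  rewrite (sum_ind_eq n (cntT T z n) (fun _ => G z)); auto. apply cnt_le.
Qed.

Lemma partB : forall rho n x, 0 <= rho <= 1/2 ->
  sumG T n (fun z => prod1 n (wt T rho z) * Mv T (tau condv n z) z) x <= 1.
Proof.
  intros rho n x Hr. set (m := cnt T n).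
  set (w := fun s => rho ^ s * (1 - rho) ^ (m - s)).
  assert (Hw : forall s, 0 <= w s).
  { intros. unfold w. apply Rmult_le_pos; apply pow_le; lra. }
  assert (HW : forall s z, cntT T z n = s -> prod1 n (wt T rho z) = w s).
  { intros s z e. rewrite prod_wt. unfold w, m. rewrite (cnt_T_split T z n), e.
    f_equal. f_equal. lia. }
  rewrite class_decomp.
  rewrite <- (total_mass rho n x), class_decomp.
  apply Rle_trans with (sum_f_R0 (fun s => w s * Bd m s) n).
  { apply sum_Rle. intros s _.
    rewrite (sumG_ext T n _ (fun z => w s * (if Nat.eqb (cntT T z n) s then Mv T (tau condv n z) z else 0))).
    2:{ intros z _. destruct (Nat.eqb_spec (cntT T z n) s) as [e|ne]; [|ring].
        rewrite (HW s z e). reflexivity. }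
    rewrite sumG_scal. apply Rmult_le_compat_l; auto. apply stop_bound. }
  apply Rle_trans with (sum_f_R0 (fun s => w s * INR (Cb m s)) n).
  2:{ right. apply sum_eq. intros s _.
    rewrite (sumG_ext T n _ (fun z => w s * (if Nat.eqb (cntT T z n) s then 1 else 0))).
    2:{ intros z _. destruct (Nat.eqb_spec (cntT T z n) s) as [e|ne]; [|ring].
        rewrite (HW s z e). ring. }
    rewrite sumG_scal, class_count. reflexivity. }
  assert (Hstep : forall i, w (S i) * INR (Cb m i) <= w i * INR (Cb m i)).
  { intros i. destruct (Compare_dec.le_lt_dec i m) as [Hl|Hl].
    2:{ rewrite Cb_gt by lia. simpl. lra. }
    apply Rmult_le_compat_r; [apply pos_INR|].
    - unfold w. destruct (Nat.eq_dec i m) as [->|Hne].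
      + replace (m - S m)%nat with 0%nat by lia. rewrite !Nat.sub_diag. simpl. rewrite !Rmult_1_r.
        pose proof (pow_le rho m (proj1 Hr)). nra.
      + replace (m - i)%nat with (S (m - S i)) by lia. simpl.
        pose proof (pow_le rho i (proj1 Hr)). pose proof (pow_le (1 - rho) (m - S i) ltac:(lra)).
        assert (0 <= rho ^ i * (1 - rho) ^ (m - S i)) by (apply Rmult_le_pos; auto).
        nra. }
  destruct n as [|n'].
  - simpl. unfold Bd. pose proof (Hw 0%nat). rewrite ?Cb_n0. simpl. nra.
  - rewrite sum_shift. simpl (Bd m 0). rewrite Rmult_0_r, Rplus_0_l.
    simpl (sum_f_R0 _ (S n')).
    apply Rle_trans with (sum_f_R0 (fun s => w s * INR (Cb m s)) n').
    + apply sum_Rle. intros s _. simpl Bd. apply Hstep.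
    + pose proof (Hw (S n')). pose proof (pos_INR (Cb m (S n'))).
      assert (0 <= w (S n') * INR (Cb m (S n'))) by (apply Rmult_le_pos; auto). lra.
Qed.
End PartB.
Lemma Rleb_true : forall x y, Rleb x y = true -> x <= y.
Proof. intros x y. unfold Rleb. destruct (Rle_dec x y); auto; discriminate. Qed.

Lemma Rleb_iff : forall x y, Rleb x y = true <-> x <= y.
Proof. intros x y. unfold Rleb. destruct (Rle_dec x y); split; auto; try discriminate; tauto. Qed.

Definition condv (c : nat) (K : nat -> bool) (q : R) (k a b : nat) : bool :=
  K k && Rleb ((INR c + INR b) / INR (Nat.max a 1)) q.

Lemma div_le : forall a x y, 0 <= a -> 0 < y -> y <= x -> a / x <= a / y.
Proof.
  intros. unfold Rdiv. apply Rmult_le_compat_l; auto. apply Rinv_le_contravar; auto.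
Qed.

Lemma B1_gen : forall T c K q z k, 0 < q ->
  (k = 0%nat \/ condv c K q k (cnt z k) (cnt (fun l => negb (z l)) k) = true) ->
  (c = 0%nat -> INR (cntT T z k) / (INR (cnt z k) + / q) <= q * Mv T k z) /\
  (c = 1%nat -> INR (cntT T z k) / INR (Nat.max (cnt z k) 1) <= q * Mv T k z).
Proof.
  intros T c K q z k Hq Hk.
  pose proof (Mv_nonneg T k z) as HM.
  assert (HVR : (cntT T z k <= cnt z k)%nat).
  { apply cnt_mono. intros l H. apply andb_true_iff in H. tauto. }
  assert (HVB : (cntTn T z k <= cnt (fun l => negb (z l)) k)%nat).
  { apply cnt_mono. intros l H. apply andb_true_iff in H. tauto. }
  set (V := cntT T z k) in *. set (Vb := cntTn T z k) in *.
  set (Rr := cnt z k) in *. set (B := cnt (fun l => negb (z l)) k) in *.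
  destruct Hk as [->|Hc].
  { assert (V = 0%nat) by (unfold V, cntT; reflexivity).
    rewrite H. simpl INR. unfold Rdiv. rewrite !Rmult_0_l. split; intros; nra. }
  unfold condv in Hc. apply andb_true_iff in Hc. destruct Hc as [_ Hc].
  apply Rleb_true in Hc. fold Rr B in Hc.
  assert (HV0 : 0 <= INR V) by apply pos_INR.
  assert (HVb : INR Vb <= INR B) by (apply le_INR; auto).
  assert (HVb0 : 0 <= INR Vb) by apply pos_INR.
  unfold Mv. fold V Vb. split; intros ->.
  - simpl INR in Hc. rewrite Rplus_0_l in Hc.
    destruct (Nat.eq_dec Rr 0) as [E|E].
    + assert (V = 0%nat) by lia. rewrite H. simpl INR. unfold Rdiv. rewrite !Rmult_0_l.
      nra.
    + replace (Nat.max Rr 1) with Rr in Hc by lia.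
      assert (HR : 0 < INR Rr) by (apply lt_0_INR; lia).
      assert (HB : INR B <= q * INR Rr).
      { replace (INR B) with (INR B / INR Rr * INR Rr) by (field; lra).
        apply Rmult_le_compat_r; lra. }
      replace (INR V / (INR Rr + / q)) with ((q * INR V) / (q * INR Rr + 1)) by (field; split; nra).
      replace (q * (INR V / (1 + INR Vb))) with ((q * INR V) / (1 + INR Vb)) by (field; lra).
      apply div_le; nra.
  - simpl INR in Hc.
    assert (HD : 1 <= INR (Nat.max Rr 1)).
    { replace 1 with (INR 1) by reflexivity. apply le_INR. lia. }
    set (D := INR (Nat.max Rr 1)) in *.
    assert (Hk : 1 + INR B <= q * D).
    { replace (1 + INR B) with ((1 + INR B) / D * D) by (field; lra).
      apply Rmult_le_compat_r; lra. }
    replace (INR V / D) with ((INR V * (1 + INR Vb)) / (D * (1 + INR Vb))) by (field; lra).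
    replace (q * (INR V / (1 + INR Vb))) with ((INR V * (q * D)) / (D * (1 + INR Vb))) by (field; lra).
    unfold Rdiv. apply Rmult_le_compat_r.
    + left. apply Rinv_0_lt_compat. nra.
    + apply Rmult_le_compat_l; lra.
Qed.
Section ProbBasics.
Variable Ps : ProbSpace.

Lemma ev_empty : ev Ps (fun _ => False).
Proof. apply (ev_ext Ps (fun w => ~ True)); [tauto|]. apply ev_compl, ev_full. Qed.

Lemma ev_union : forall A B, ev Ps A -> ev Ps B -> ev Ps (fun w => A w \/ B w).
Proof.
  intros A B HA HB.
  apply (ev_ext Ps (fun w => exists n, (match n with O => A | _ => B end) w)).
  - intros w; split.
    + intros [[|n] H]; auto.
    + intros [H|H]; [exists 0%nat|exists 1%nat]; auto.
  - apply ev_cunion. intros [|n]; auto.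
Qed.

Lemma ev_inter : forall A B, ev Ps A -> ev Ps B -> ev Ps (fun w => A w /\ B w).
Proof.
  intros A B HA HB.
  apply (ev_ext Ps (fun w => ~ (~ A w \/ ~ B w))).
  - intros w. split.
    + intros H. split; apply NNPP; tauto.
    + tauto.
  - apply ev_compl, ev_union; apply ev_compl; auto.
Qed.

Lemma sum_const : forall c n, sum_f_R0 (fun _ => c) n = INR (S n) * c.
Proof. intros c n; induction n; cbn [sum_f_R0]; [simpl; ring|]. rewrite IHn, !S_INR. ring. Qed.

Lemma Pr_empty : Pr Ps (fun _ => False) = 0.
Proof.
  pose proof (Pr_sigma_add Ps (fun _ _ => False) (fun _ => ev_empty)
    ltac:(intros; tauto)) as H. cbv beta in H.
  rewrite (Pr_ext Ps (fun w => exists n : nat, False) (fun _ => False)) in H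
    by (intros; split; [intros [_ f]; auto|tauto]).
  set (c := Pr Ps (fun _ => False)) in *.
  assert (Hc : 0 <= c) by (apply Pr_nonneg, ev_empty).
  destruct (Rle_lt_or_eq_dec 0 c Hc) as [Hp|]; [|auto].
  exfalso. destruct (H c Hp) as [N0 HN]. specialize (HN (S N0) ltac:(lia)).
  rewrite sum_const in HN. unfold R_dist in HN.
  rewrite Rabs_right in HN.
  - rewrite !S_INR in HN. pose proof (pos_INR N0). nra.
  - rewrite !S_INR. pose proof (pos_INR N0). nra.
Qed.

Lemma Pr_zero : forall A, (forall w, ~ A w) -> Pr Ps A = 0.
Proof. intros. rewrite <- Pr_empty. apply Pr_ext. firstorder. Qed.

Lemma Pr_add2 : forall A B, ev Ps A -> ev Ps B -> (forall w, A w -> B w -> False) ->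
  Pr Ps (fun w => A w \/ B w) = Pr Ps A + Pr Ps B.
Proof.
  intros A B HA HB Hd.
  set (An := fun n : nat => match n with O => A | 1%nat => B | _ => fun _ : Ps => False end).
  assert (Hev : forall n, ev Ps (An n)) by (intros [|[|n]]; simpl; auto using ev_empty).
  assert (Hdis : forall n m, n <> m -> forall w, An n w -> An m w -> False).
  { intros [|[|n]] [|[|m]] Hnm w; simpl; intros; try tauto; eauto. }
  pose proof (Pr_sigma_add Ps An Hev Hdis) as H1.
  rewrite (Pr_ext Ps (fun w => exists n, An n w) (fun w => A w \/ B w)) in H1.
  2:{ intros w. split.
      - intros [[|[|n]] H]; simpl in H; tauto.
      - intros [H|H]; [exists 0%nat|exists 1%nat]; auto. }
  apply (uniqueness_sum (fun n => Pr Ps (An n))); auto.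
  intros eps He. exists 1%nat. intros n Hn.
  assert (E : sum_f_R0 (fun n => Pr Ps (An n)) n = Pr Ps A + Pr Ps B).
  { destruct n; [lia|]. clear Hn. induction n.
    - simpl. reflexivity.
    - cbn [sum_f_R0]. cbn [sum_f_R0] in IHn. rewrite IHn. simpl. rewrite Pr_empty. ring. }
  rewrite E. unfold R_dist. rewrite Rminus_diag, Rabs_R0. auto.
Qed.

Lemma Pr_split : forall A B, ev Ps A -> ev Ps B ->
  Pr Ps A = Pr Ps (fun w => A w /\ B w) + Pr Ps (fun w => A w /\ ~ B w).
Proof.
  intros A B HA HB. rewrite <- Pr_add2.
  - apply Pr_ext. intros w. split; [|tauto]. intros H. destruct (classic (B w)); tauto.
  - apply ev_inter; auto.
  - apply ev_inter; auto. apply ev_compl; auto.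
  - tauto.
Qed.

End ProbBasics.
Section Events.
Variable Ps : ProbSpace.
Variable N : nat.
Variable p : nat -> Ps -> R.
Hypothesis Hmeas : forall l u, ev Ps (fun w => p l w <= u).

Definition X (w : Ps) : nat -> bool := small Ps p w.

Lemma X_true : forall w l, X w l = true <-> p l w <= 1/2.
Proof. intros. unfold X, small. apply Rleb_iff. Qed.

Lemma ev_Xt : forall l, ev Ps (fun w => X w l = true).
Proof. intros. apply (ev_ext Ps (fun w => p l w <= 1/2)); [|auto]. intros; rewrite X_true; tauto. Qed.

Lemma ev_dep : forall n (P : (nat -> bool) -> Prop),
  (forall x y, (forall l, (1 <= l <= n)%nat -> x l = y l) -> P x -> P y) ->
  ev Ps (fun w => P (X w)).
Proof.
  induction n; intros P HP.
  - destruct (classic (P (fun _ => false))) as [H|H].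
    + apply (ev_ext Ps (fun _ => True)); [|apply ev_full].
      intros w; split; auto. intros _. eapply HP; [|exact H]. intros; lia.
    + apply (ev_ext Ps (fun _ => False)); [|apply ev_empty].
      intros w; split; [tauto|]. intros H'. apply H. eapply HP; [|exact H']. intros; lia.
  - set (P1 := fun x => P (upd x (S n) true)). set (P0 := fun x => P (upd x (S n) false)).
    assert (Hloc : forall b x y, (forall l, (1 <= l <= n)%nat -> x l = y l) ->
      P (upd x (S n) b) -> P (upd y (S n) b)).
    { intros b x y Hxy. apply HP. intros l Hl. unfold upd.
      destruct (Nat.eqb_spec l (S n)); auto. apply Hxy. lia. }
    assert (E1 : ev Ps (fun w => P1 (X w))) by (apply IHn; intros; eapply Hloc; eauto).
    assert (E0 : ev Ps (fun w => P0 (X w))) by (apply IHn; intros; eapply Hloc; eauto).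
    apply (ev_ext Ps (fun w => (X w (S n) = true /\ P1 (X w)) \/ (~ X w (S n) = true /\ P0 (X w)))).
    2:{ apply ev_union; apply ev_inter; auto; [apply ev_Xt| apply ev_compl, ev_Xt]. }
    assert (Hu : forall w b, X w (S n) = b -> forall l, (1 <= l <= S n)%nat -> upd (X w) (S n) b l = X w l).
    { intros w b Hb l _. unfold upd. destruct (Nat.eqb_spec l (S n)); subst; auto. }
    intros w. unfold P1, P0. split.
    + intros [[Hb H]|[Hb H]].
      * eapply HP; [|exact H]. apply Hu; auto.
      * apply not_true_is_false in Hb. eapply HP; [|exact H]. apply Hu; auto.
    + intros H. destruct (X w (S n)) eqn:Hb.
      * left. split; auto. eapply HP; [|exact H]. intros; symmetry; apply Hu; auto.
      * right. split; [congruence|]. eapply HP; [|exact H]. intros; symmetry; apply Hu; auto.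
Qed.

Definition localN (P : (nat -> bool) -> Prop) :=
  forall x y, (forall l, (1 <= l <= N)%nat -> x l = y l) -> P x -> P y.

Definition Ag (S : nat -> Prop) (z : nat -> bool) (w : Ps) : Prop :=
  forall l, (1 <= l <= N)%nat -> S l -> X w l = z l.

Lemma ev_PAg : forall PA S z, localN PA -> ev Ps (fun w => PA (X w) /\ Ag S z w).
Proof.
  intros PA S z HPA.
  apply (ev_ext Ps (fun w => (fun y => PA y /\ forall l, (1 <= l <= N)%nat -> S l -> y l = z l) (X w))).
  { intros; unfold Ag; tauto. }
  apply (ev_dep N (fun y => PA y /\ forall l, (1 <= l <= N)%nat -> S l -> y l = z l)).
  intros x y Hxy [H1 H2]. split.
  - eapply HPA; eauto.
  - intros l Hl Hs. rewrite <- Hxy; auto.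
Qed.

Lemma splitG : forall PA, localN PA -> forall n (T : nat -> bool) (Sx : nat -> Prop) x,
  (n <= N)%nat -> (forall l, (1 <= l <= n)%nat -> Sx l -> T l = true -> False) ->
  Pr Ps (fun w => PA (X w) /\ Ag Sx x w) =
  sumG T n (fun z => Pr Ps (fun w => PA (X w) /\ Ag (fun l => Sx l \/ (T l = true /\ (l <= n)%nat)) z w)) x.
Proof.
  intros PA HPA. induction n; intros T Sx x Hn Hd.
  - simpl. apply Pr_ext. intros w. unfold Ag. split.
    + intros [H1 H2]. split; auto. intros l Hl [Hs|[_ Hl']]; [auto|lia].
    + intros [H1 H2]. split; auto.
  - simpl sumG. destruct (T (S n)) eqn:HT.
    + set (S' := fun l => Sx l \/ l = S n).
      assert (Hd' : forall l, (1 <= l <= n)%nat -> S' l -> T l = true -> False).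
      { intros l Hl [Hs| ->] Ht; [apply (Hd l); auto; lia|lia]. }
      assert (Hext : forall z, Pr Ps (fun w => PA (X w) /\ Ag (fun l => Sx l \/ (T l = true /\ (l <= S n)%nat)) z w)
        = Pr Ps (fun w => PA (X w) /\ Ag (fun l => S' l \/ (T l = true /\ (l <= n)%nat)) z w)).
      { intros z. apply Pr_ext. intros w. unfold Ag, S'. split; intros [H1 H2]; split; auto.
        - intros l Hl Hs. apply H2; auto. destruct Hs as [[?| ->]|[? ?]]; auto; right; split; auto; lia.
        - intros l Hl Hs. apply H2; auto. destruct Hs as [?|[? ?]]; auto.
          destruct (Nat.eq_dec l (S n)); [left; right; auto|right; split; auto; lia]. }
      rewrite (sumG_ext T n _ (fun z => Pr Ps (fun w => PA (X w) /\ Ag (fun l => S' l \/ (T l = true /\ (l <= n)%nat)) z w)))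
        by (intros; apply Hext).
      rewrite (sumG_ext T n _ (fun z => Pr Ps (fun w => PA (X w) /\ Ag (fun l => S' l \/ (T l = true /\ (l <= n)%nat)) z w)) (upd x (S n) false))
        by (intros; apply Hext).
      rewrite <- !IHn by (auto; lia).
      assert (HSn : ~ Sx (S n)) by (intros Hs; apply (Hd (S n)); auto; lia).
      rewrite (Pr_split Ps _ (fun w => X w (S n) = true)).
      2:{ apply ev_PAg; auto. }
      2:{ apply ev_Xt. }
      f_equal; apply Pr_ext; intros w; unfold Ag, S', upd; split.
      * intros [[H1 H2] H3]. split; auto. intros l Hl [Hs| ->].
        -- destruct (Nat.eqb_spec l (S n)); [subst; tauto|auto].
        -- rewrite Nat.eqb_refl. auto.
      * intros [H1 H2]. split; [split; auto|].
        -- intros l Hl Hs. specialize (H2 l Hl (or_introl Hs)).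
           destruct (Nat.eqb_spec l (S n)); [subst; tauto|auto].
        -- specialize (H2 (S n) ltac:(lia) (or_intror eq_refl)). rewrite Nat.eqb_refl in H2. auto.
      * intros [[H1 H2] H3]. split; auto. intros l Hl [Hs| ->].
        -- destruct (Nat.eqb_spec l (S n)); [subst; tauto|auto].
        -- rewrite Nat.eqb_refl. apply not_true_is_false. auto.
      * intros [H1 H2]. split; [split; auto|].
        -- intros l Hl Hs. specialize (H2 l Hl (or_introl Hs)).
           destruct (Nat.eqb_spec l (S n)); [subst; tauto|auto].
        -- specialize (H2 (S n) ltac:(lia) (or_intror eq_refl)). rewrite Nat.eqb_refl in H2.
           rewrite H2. discriminate.
    + rewrite (IHn T) by (auto; lia || (intros l0 ? ? ?; apply (Hd l0); auto; lia)).
      apply sumG_ext. intros z _. apply Pr_ext. intros w. unfold Ag. split; intros [H1 H2]; split; auto.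
      * intros l Hl Hs. apply H2; auto. destruct Hs as [?|[Ht ?]]; auto. right; split; auto.
        assert (l <> S n) by (intro; subst; congruence). lia.
      * intros l Hl Hs. apply H2; auto. destruct Hs as [Hs|[Ht Hs]]; [left; auto|right; split; auto].
Qed.

End Events.
Section Factor.
Variable Ps : ProbSpace.
Variable N : nat.
Variable p : nat -> Ps -> R.
Variable null : nat -> bool.
Hypothesis Hmeas : forall l u, ev Ps (fun w => p l w <= u).
Hypothesis Hind : nulls_indep Ps N null p.

Definition rhol l := Pr Ps (fun w => p l w <= 1/2).

Definition EnP n (z y : nat -> bool) := forall l, (1 <= l <= N)%nat ->
  (z l = true -> y l = true) /\ ((l <= n)%nat -> z l = false -> y l = false).
Definition PnnP n (z y : nat -> bool) := forall l, (1 <= l <= N)%nat -> null l = false ->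
  (z l = true -> y l = true) /\ ((l <= n)%nat -> z l = false -> y l = false).
Definition Fn n (z : nat -> bool) : R := prod1 N (fun l => if null l then (if z l then rhol l
  else if Nat.leb l n then 1 - rhol l else 1) else 1).

Lemma ev_EnP : forall n z, ev Ps (fun w => EnP n z (X Ps p w)).
Proof.
  intros. apply (ev_dep Ps p Hmeas N (EnP n z)). intros x y Hxy H l Hl.
  rewrite <- Hxy by auto. auto.
Qed.

Lemma ev_PnnP : forall n z, ev Ps (fun w => PnnP n z (X Ps p w)).
Proof.
  intros. apply (ev_dep Ps p Hmeas N (PnnP n z)). intros x y Hxy H l Hl.
  rewrite <- Hxy by auto. auto.
Qed.

Lemma factor : forall n, (n <= N)%nat -> forall z,
  Pr Ps (fun w => EnP n z (X Ps p w)) = Fn n z * Pr Ps (fun w => PnnP n z (X Ps p w)).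
Proof.
  induction n; intros Hn z.
  - pose proof (Hind z (fun _ => 1/2)) as H.
    rewrite (Pr_ext Ps (fun w => EnP 0 z (X Ps p w))
        (fun w => forall l, (1 <= l <= N)%nat -> z l = true -> p l w <= 1/2)).
    2:{ intros w. unfold EnP. split.
        - intros H1 l Hl Hz. apply X_true. apply (H1 l Hl). auto.
        - intros H1 l Hl. split; [|lia]. intros Hz. apply X_true. auto. }
    rewrite H. f_equal.
    + unfold Fn. apply prod1_ext. intros l Hl.
      destruct (z l), (null l); simpl; auto.
      replace (Nat.leb l 0) with false by (symmetry; apply Nat.leb_gt; lia). reflexivity.
    + apply Pr_ext. intros w. unfold PnnP. split.
      * intros H1 l Hl Hnl. split; [|lia]. intros Hz. apply X_true. apply (H1 l Hl Hz Hnl).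
      * intros H1 l Hl Hz Hnl. apply X_true. apply (H1 l Hl Hnl). auto.
  - destruct (z (S n)) eqn:Hz.
    + assert (E1 : forall y, EnP (S n) z y <-> EnP n z y).
      { intros y. unfold EnP. split; intros H l Hl; destruct (H l Hl) as [A B]; split; auto;
        intros Hle Hzl; apply B; auto; destruct (Nat.eq_dec l (S n)); subst; try congruence; lia. }
      assert (E2 : forall y, PnnP (S n) z y <-> PnnP n z y).
      { intros y. unfold PnnP. split; intros H l Hl Hnl; destruct (H l Hl Hnl) as [A B]; split; auto;
        intros Hle Hzl; apply B; auto; destruct (Nat.eq_dec l (S n)); subst; try congruence; lia. }
      rewrite (Pr_ext Ps _ _ (fun w => E1 (X Ps p w))), (Pr_ext Ps _ _ (fun w => E2 (X Ps p w))).
      rewrite IHn by lia. f_equal. unfold Fn. apply prod1_ext. intros l Hl.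
      destruct (Nat.eq_dec l (S n)) as [->|Hne]; [rewrite Hz; reflexivity|].
      replace (Nat.leb l (S n)) with (Nat.leb l n); [reflexivity|].
      destruct (Nat.leb_spec l n), (Nat.leb_spec l (S n)); auto; lia.
    + set (z' := upd z (S n) true).
      assert (Hs1 : forall (Q : nat -> (nat -> bool) -> (nat -> bool) -> Prop),
        (forall m zz y, Q m zz y <-> forall l, (1 <= l <= N)%nat -> (null l = false \/ Q = Q) -> True) -> True)
        by auto.
      clear Hs1.
      assert (SE : Pr Ps (fun w => EnP n z (X Ps p w)) =
        Pr Ps (fun w => EnP n z' (X Ps p w)) + Pr Ps (fun w => EnP (S n) z (X Ps p w))).
      { rewrite (Pr_split Ps _ (fun w => X Ps p w (S n) = true)); [|apply ev_EnP|apply ev_Xt; auto].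
        f_equal; apply Pr_ext; intros w; unfold EnP, z', upd; split.
        - intros [H1 H2] l Hl. destruct (Nat.eqb_spec l (S n)) as [->|Hne]; [split; auto; lia|].
          apply H1; auto.
        - intros H1. split.
          + intros l Hl. destruct (H1 l Hl) as [A B].
            destruct (Nat.eqb_spec l (S n)) as [->|Hne]; [split; [congruence|lia]|]. auto.
          + destruct (H1 (S n) ltac:(lia)) as [A _]. rewrite Nat.eqb_refl in A. auto.
        - intros [H1 H2] l Hl. destruct (H1 l Hl) as [A B]. split; auto.
          intros Hle Hzl. destruct (Nat.eq_dec l (S n)) as [->|Hne]; [apply not_true_is_false; auto|].
          apply B; auto; lia.
        - intros H1. split.
          + intros l Hl. destruct (H1 l Hl) as [A B]. split; auto.
          + destruct (H1 (S n) ltac:(lia)) as [_ B]. rewrite B; auto. }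
      assert (SP : Pr Ps (fun w => PnnP n z (X Ps p w)) =
        Pr Ps (fun w => PnnP n z' (X Ps p w)) + Pr Ps (fun w => PnnP (S n) z (X Ps p w))
        \/ null (S n) = true).
      { destruct (null (S n)) eqn:Hnull; [right; auto|left].
        rewrite (Pr_split Ps _ (fun w => X Ps p w (S n) = true)); [|apply ev_PnnP|apply ev_Xt; auto].
        f_equal; apply Pr_ext; intros w; unfold PnnP, z', upd; split.
        - intros [H1 H2] l Hl Hnl. destruct (Nat.eqb_spec l (S n)) as [->|Hne]; [split; auto; lia|].
          apply H1; auto.
        - intros H1. split.
          + intros l Hl Hnl. destruct (H1 l Hl Hnl) as [A B].
            destruct (Nat.eqb_spec l (S n)) as [->|Hne]; [split; [congruence|lia]|]. auto.
          + destruct (H1 (S n) ltac:(lia) Hnull) as [A _]. rewrite Nat.eqb_refl in A. auto.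
        - intros [H1 H2] l Hl Hnl. destruct (H1 l Hl Hnl) as [A B]. split; auto.
          intros Hle Hzl. destruct (Nat.eq_dec l (S n)) as [->|Hne]; [apply not_true_is_false; auto|].
          apply B; auto; lia.
        - intros H1. split.
          + intros l Hl Hnl. destruct (H1 l Hl Hnl) as [A B]. split; auto.
          + destruct (H1 (S n) ltac:(lia) Hnull) as [_ B]. rewrite B; auto. }
      assert (Hupd : forall l, l <> S n -> z' l = z l).
      { intros l Hl. unfold z', upd. rewrite (proj2 (Nat.eqb_neq l (S n)) Hl). auto. }
      assert (Hleb : forall l, l <> S n -> Nat.leb l (S n) = Nat.leb l n).
      { intros l Hl. destruct (Nat.leb_spec l n), (Nat.leb_spec l (S n)); auto; lia. }
      assert (Hz' : z' (S n) = true) by (unfold z', upd; rewrite Nat.eqb_refl; auto).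
      pose proof (IHn ltac:(lia) z) as I1. pose proof (IHn ltac:(lia) z') as I2.
      destruct (null (S n)) eqn:Hnull.
      * assert (PE1 : Pr Ps (fun w => PnnP n z' (X Ps p w)) = Pr Ps (fun w => PnnP n z (X Ps p w))).
        { apply Pr_ext. intros w. unfold PnnP. split; intros H l Hl Hnl;
          (destruct (Nat.eq_dec l (S n)) as [->|Hne]; [congruence|]);
          specialize (H l Hl Hnl); rewrite ?(Hupd l Hne) in *; auto. }
        assert (PE2 : Pr Ps (fun w => PnnP (S n) z (X Ps p w)) = Pr Ps (fun w => PnnP n z (X Ps p w))).
        { apply Pr_ext. intros w. unfold PnnP. split; intros H l Hl Hnl;
          (destruct (Nat.eq_dec l (S n)) as [->|Hne]; [congruence|]);
          destruct (H l Hl Hnl) as [A B]; split; auto; intros; apply B; auto; lia. }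
        assert (F1 : Fn n z' = rhol (S n) * Fn n z).
        { unfold Fn. apply (prod1_one N _ _ (S n)); [lia| |].
          - intros l Hl. rewrite (Hupd l Hl). reflexivity.
          - rewrite Hnull, Hz', Hz. replace (Nat.leb (S n) n) with false
              by (symmetry; apply Nat.leb_gt; lia). ring. }
        assert (F2 : Fn (S n) z = (1 - rhol (S n)) * Fn n z).
        { unfold Fn. apply (prod1_one N _ _ (S n)); [lia| |].
          - intros l Hl. rewrite (Hleb l Hl). reflexivity.
          - rewrite Hnull, Hz, Nat.leb_refl. replace (Nat.leb (S n) n) with false
              by (symmetry; apply Nat.leb_gt; lia). ring. }
        rewrite PE2, F2. rewrite PE1, F1 in I2. lra.
      * destruct SP as [SP|]; [|discriminate].
        assert (F1 : Fn n z' = Fn n z).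
        { unfold Fn. apply prod1_ext. intros l _. destruct (Nat.eq_dec l (S n)) as [->|Hne].
          - rewrite Hnull. reflexivity.
          - rewrite (Hupd l Hne). reflexivity. }
        assert (F2 : Fn (S n) z = Fn n z).
        { unfold Fn. apply prod1_ext. intros l _. destruct (Nat.eq_dec l (S n)) as [->|Hne].
          - rewrite Hnull. reflexivity.
          - rewrite (Hleb l Hne). reflexivity. }
        rewrite F2. rewrite F1 in I2. rewrite I1, I2 in SE. rewrite SP in SE. nra.
Qed.

End Factor.
Lemma scal_sum' : forall c a k, c * sum_f_R0 a k = sum_f_R0 (fun i => c * a i) k.
Proof. intros c a k; induction k; cbn [sum_f_R0]; [ring|]. rewrite <- IHk. ring. Qed.

Section Main.
Variable Ps : ProbSpace.
Variable N : nat.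
Variable p : nat -> Ps -> R.
Variable null : nat -> bool.
Variable q : R.
Variable K : nat -> bool.
Hypothesis Hmeas : forall l u, ev Ps (fun w => p l w <= u).
Hypothesis Hind : nulls_indep Ps N null p.
Hypothesis Hid : nulls_ident Ps N null p.
Hypothesis Hsu : nulls_superunif Ps N null p.
Hypothesis Hq : 0 < q <= 1.

Definition kh c z := tau (condv c K q) N z.
Definition Vz c z := cntT null z (kh c z).
Definition Rz c z := cnt z (kh c z).
Definition nn := fun l => negb (null l).
Definition x0 : nat -> bool := fun _ => false.
Definition AgN := Ag Ps N p.
Definition Wz (z : nat -> bool) := prod1 N (fun l => if null l then (if z l then rhol Ps p l else 1 - rhol Ps p l) else 1).
Definition Dop (H : (nat -> bool) -> R) :=
  sumG nn N (fun y => Pr Ps (AgN (fun l => null l = false) y) * sumG null N H y) x0.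

Lemma agree_loc : forall c z z', (forall l, (1 <= l <= N)%nat -> z l = z' l) ->
  kh c z = kh c z' /\ Vz c z = Vz c z' /\ Rz c z = Rz c z'.
Proof.
  intros c z z' H.
  assert (E : kh c z = kh c z').
  { unfold kh, tau. apply max_upto_ext. intros k Hk.
    rewrite (cnt_ext z z' k), (cnt_ext (fun l => negb (z l)) (fun l => negb (z' l)) k); auto;
    intros l Hl; rewrite H; auto; lia. }
  pose proof (max_upto_le (fun k => condv c K q k (cnt z' k) (cnt (fun l => negb (z' l)) k)) N) as Hle.
  fold (tau (condv c K q) N z') in Hle. fold (kh c z') in Hle.
  split; auto. unfold Vz, Rz, cntT. rewrite E. split; apply cnt_ext; intros l Hl; rewrite H; auto; lia.
Qed.

Lemma rho_ex : exists rho, 0 <= rho <= 1/2 /\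
  forall l, (1 <= l <= N)%nat -> null l = true -> rhol Ps p l = rho.
Proof.
  destruct (classic (exists l0, (1 <= l0 <= N)%nat /\ null l0 = true)) as [[l0 [Hl0 Hn0]]|Hno].
  - exists (rhol Ps p l0). split.
    + split; [apply Pr_nonneg, Hmeas|]. apply Hsu; auto; lra.
    + intros l Hl Hn. unfold rhol. apply Hid; auto.
  - exists 0. split; [lra|]. intros l Hl Hn. exfalso. apply Hno. eauto.
Qed.

Lemma Dop_ext : forall H1 H2, (forall z, H1 z = H2 z) -> Dop H1 = Dop H2.
Proof. intros. unfold Dop. f_equal. extensionality y. f_equal. f_equal. extensionality z. auto. Qed.

Lemma Dop_scal : forall c H, Dop (fun z => c * H z) = c * Dop H.
Proof.
  intros. unfold Dop. rewrite <- sumG_scal. apply sumG_ext. intros y _. rewrite sumG_scal. ring.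
Qed.

Lemma Dop_sum : forall H k, Dop (fun z => sum_f_R0 (fun i => H i z) k) = sum_f_R0 (fun i => Dop (H i)) k.
Proof.
  intros. unfold Dop. rewrite <- sumG_sum. apply sumG_ext. intros y _.
  rewrite sumG_sum, scal_sum'. reflexivity.
Qed.

Lemma Pr_nn_total : sumG nn N (fun y => Pr Ps (AgN (fun l => null l = false) y)) x0 = 1.
Proof.
  rewrite <- (Pr_full Ps).
  rewrite (Pr_ext Ps (fun _ => True) (fun w => (fun _ => True) (X Ps p w) /\ AgN (fun _ => False) x0 w)).
  2:{ intros w. unfold AgN, Ag. split; [|tauto]. intros _. split; auto. intros; tauto. }
  unfold AgN. rewrite (splitG Ps N p Hmeas (fun _ => True) ltac:(intros ? ? _ _; auto) N nn); auto.
  - apply sumG_ext. intros y _. apply Pr_ext. intros w. unfold Ag, nn. split.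
    + intros H. split; auto. intros l Hl [[]|[Ht Hle]]. apply H; auto. destruct (null l); simpl in *; congruence.
    + intros [_ H] l Hl Hn. apply H; auto. right. split; [rewrite Hn; auto|lia].
Qed.

Lemma PrA : forall b : (nat -> bool) -> bool,
  (forall x y, (forall l, (1 <= l <= N)%nat -> x l = y l) -> b x = b y) ->
  Pr Ps (fun w => b (X Ps p w) = true) = Dop (fun z => (if b z then 1 else 0) * Wz z).
Proof.
  intros b Hb.
  assert (Hloc : localN N (fun y => b y = true)).
  { intros x y Hxy H. rewrite <- (Hb x y); auto. }
  rewrite (Pr_ext Ps _ (fun w => (fun y => b y = true) (X Ps p w) /\ AgN (fun _ => False) x0 w)).
  2:{ intros w. unfold AgN, Ag. split; [|tauto]. intros H. split; auto. intros; tauto. }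
  unfold AgN. rewrite (splitG Ps N p Hmeas _ Hloc N nn); auto.
  unfold Dop. apply sumG_ext. intros y _.
  rewrite (Pr_ext Ps _ (fun w => (fun y => b y = true) (X Ps p w) /\ Ag Ps N p (fun l => null l = false) y w)).
  2:{ intros w. unfold Ag, nn. split; intros [H1 H2]; split; auto.
      - intros l Hl Hn. apply H2; auto. right. rewrite Hn. split; auto; lia.
      - intros l Hl [[]|[Ht Hle]]. apply H2; auto. destruct (null l); simpl in *; congruence. }
  rewrite (splitG Ps N p Hmeas _ Hloc N null); auto.
  2:{ intros l _ H1 H2. congruence. }
  rewrite <- sumG_scal. apply sumG_ext. intros z Hz.
  assert (HPz : Pr Ps (Ag Ps N p (fun l => null l = false) z) = Pr Ps (AgN (fun l => null l = false) y)).
  { apply Pr_ext. intros w. unfold AgN, Ag. split; intros H l Hl Hn; rewrite (H l Hl Hn);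
    [|symmetry]; apply (Dom_eq null N y z l Hz); auto. }
  destruct (b z) eqn:Ebz.
  - rewrite <- HPz.
    rewrite (Pr_ext Ps _ (fun w => EnP N N z (X Ps p w))).
    2:{ intros w. unfold Ag, EnP. split.
        - intros [H1 H2] l Hl. assert (Hx : X Ps p w l = z l).
          { apply H2; auto. destruct (null l) eqn:E; [right; split; auto; lia|left; auto]. }
          rewrite Hx. split; auto.
        - intros H. split.
          + rewrite <- Ebz. apply Hb. intros l Hl. destruct (H l Hl) as [A B].
            destruct (z l); auto. apply B; auto. lia.
          + intros l Hl _. destruct (H l Hl) as [A B]. destruct (z l); auto. apply B; auto; lia. }
    rewrite (factor Ps N p null Hmeas Hind N ltac:(lia)).
    rewrite (Pr_ext Ps (fun w => PnnP N null N z (X Ps p w)) (Ag Ps N p (fun l => null l = false) z)).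
    2:{ intros w. unfold Ag, PnnP. split.
        - intros H l Hl Hn. destruct (H l Hl Hn) as [A B]. destruct (z l); auto. apply B; auto; lia.
        - intros H l Hl Hn. rewrite (H l Hl Hn). split; auto. }
    unfold Fn, Wz. rewrite (prod1_ext N _ (fun l => if null l then (if z l then rhol Ps p l else 1 - rhol Ps p l) else 1)).
    + ring.
    + intros l Hl. destruct (null l), (z l); auto. rewrite (proj2 (Nat.leb_le l N)) by lia. auto.
  - rewrite Pr_zero; [ring|]. intros w [H1 H2].
    rewrite (Hb z (X Ps p w)) in Ebz; [cbv beta in H1; congruence|].
    intros l Hl. symmetry. apply H2; auto. destruct (null l) eqn:E; [right; split; auto; lia|left; auto].
Qed.

Lemma main_gen : forall c (f : nat -> nat -> R),
  (forall z, f (Vz c z) (Rz c z) <= q * Mv null (kh c z) z) ->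
  expect2 Ps N f (fun w => Vz c (X Ps p w)) (fun w => Rz c (X Ps p w)) <= q.
Proof.
  intros c f Hf. destruct rho_ex as [rho [Hr Hrl]].
  unfold expect2.
  assert (E : forall v r, Pr Ps (fun w => Vz c (X Ps p w) = v /\ Rz c (X Ps p w) = r)
     = Dop (fun z => (if Nat.eqb (Vz c z) v && Nat.eqb (Rz c z) r then 1 else 0) * Wz z)).
  { intros v r. rewrite <- PrA.
    - apply Pr_ext. intros w. rewrite andb_true_iff, !Nat.eqb_eq. tauto.
    - intros x y Hxy. destruct (agree_loc c x y Hxy) as [_ [A B]]. rewrite A, B. auto. }
  assert (E2 : sum_f_R0 (fun v => sum_f_R0 (fun r => f v r *
      Pr Ps (fun w => Vz c (X Ps p w) = v /\ Rz c (X Ps p w) = r)) N) N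
    = Dop (fun z => f (Vz c z) (Rz c z) * Wz z)).
  { transitivity (sum_f_R0 (fun v => Dop (fun z => sum_f_R0 (fun r =>
        f v r * ((if Nat.eqb (Vz c z) v && Nat.eqb (Rz c z) r then 1 else 0) * Wz z)) N)) N).
    { apply sum_eq. intros v _. rewrite Dop_sum. apply sum_eq. intros r _.
      rewrite E, Dop_scal. reflexivity. }
    rewrite <- Dop_sum. apply Dop_ext. intros z.
    pose proof (cntT_kh := proj1 (agree_loc c z z (fun _ _ => eq_refl))).
    assert (HV : (Vz c z <= N)%nat).
    { unfold Vz. eapply Nat.le_trans; [apply cnt_le|]. unfold kh, tau. apply max_upto_le. }
    assert (HR : (Rz c z <= N)%nat).
    { unfold Rz. eapply Nat.le_trans; [apply cnt_le|]. unfold kh, tau. apply max_upto_le. }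
    rewrite (sum_eq _ (fun v => if Nat.eqb (Vz c z) v then f v (Rz c z) * Wz z else 0)).
    - rewrite (sum_ind_eq N (Vz c z) (fun v => f v (Rz c z) * Wz z)); auto.
    - intros v _. destruct (Nat.eqb (Vz c z) v) eqn:Ev.
      + rewrite (sum_eq _ (fun r => if Nat.eqb (Rz c z) r then f v r * Wz z else 0)).
        * rewrite (sum_ind_eq N (Rz c z) (fun r => f v r * Wz z)); auto.
        * intros r _. simpl. destruct (Nat.eqb (Rz c z) r); ring.
      + rewrite (sum_eq _ (fun r => 0 * 0)).
        * rewrite <- scal_sum'. ring.
        * intros r _. simpl. ring. }
  rewrite E2. unfold Dop.
  apply Rle_trans with (sumG nn N (fun y => Pr Ps (AgN (fun l => null l = false) y) * q) x0).
  - apply sumG_le. intros y _. apply Rmult_le_compat_l.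
    { apply Pr_nonneg. unfold AgN.
      apply (ev_ext Ps (fun w => (fun _ => True) (X Ps p w) /\ Ag Ps N p (fun l => null l = false) y w));
        [tauto|]. apply (ev_PAg Ps N p Hmeas (fun _ => True)). intros ? ? _ _; auto. }
    assert (HW : forall z, Wz z = prod1 N (wt null rho z)).
    { intros z. unfold Wz, wt. apply prod1_ext. intros l Hl. destruct (null l) eqn:En; auto.
      rewrite (Hrl l Hl En). reflexivity. }
    apply Rle_trans with (sumG null N (fun z => q * (prod1 N (wt null rho z) * Mv null (tau (condv c K q) N z) z)) y).
    + apply sumG_le. intros z _. rewrite HW.
      assert (0 <= prod1 N (wt null rho z)).
      { apply prod1_nonneg. intros l. unfold wt. destruct (null l), (z l); lra. }
      specialize (Hf z). unfold kh in Hf. nra.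
    + rewrite sumG_scal. pose proof (partB null (condv c K q) rho N y Hr). nra.
  - idtac.
    rewrite (sumG_ext nn N _ (fun y => q * Pr Ps (AgN (fun l => null l = false) y))) by (intros; ring).
    rewrite sumG_scal, Pr_nn_total. lra.
Qed.

End Main.

Theorem lemma4 (Ps : ProbSpace) (N : nat) (p : nat -> Ps -> R)
  (null : nat -> bool) (q : R) (K : nat -> bool)
  (Hmeas : forall l u, ev Ps (fun w => p l w <= u))
  (Hind : nulls_indep Ps N null p)
  (Hid : nulls_ident Ps N null p)
  (Hsu : nulls_superunif Ps N null p)
  (Hq : 0 < q <= 1)
  (HK : forall k, K k = true -> (1 <= k <= N)%nat) :
  expect2 Ps N (fun v r => INR v / (INR r + / q))
    (fun w => Vcount _ p null (khat_gen _ p 0 N K q w) w)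
    (fun w => Rcount _ p (khat_gen _ p 0 N K q w) w) <= q
  /\
  expect2 Ps N (fun v r => INR v / INR (Nat.max r 1))
    (fun w => Vcount _ p null (khat_gen _ p 1 N K q w) w)
    (fun w => Rcount _ p (khat_gen _ p 1 N K q w) w) <= q.
Proof.
  split.
  - apply (main_gen Ps N p null q K Hmeas Hind Hid Hsu Hq 0 (fun v r => INR v / (INR r + / q))).
    intros z. unfold Vz, Rz, kh.
    pose proof (max_upto_spec (fun k => condv 0 K q k (cnt z k) (cnt (fun l => negb (z l)) k)) N) as Hs.
    apply (proj1 (B1_gen null 0 K q z _ (proj1 Hq) Hs)). reflexivity.
  - apply (main_gen Ps N p null q K Hmeas Hind Hid Hsu Hq 1 (fun v r => INR v / INR (Nat.max r 1))).
    intros z. unfold Vz, Rz, kh.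
    pose proof (max_upto_spec (fun k => condv 1 K q k (cnt z k) (cnt (fun l => negb (z l)) k)) N) as Hs.
    apply (proj2 (B1_gen null 1 K q z _ (proj1 Hq) Hs)). reflexivity.
Qed.
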